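(* Let $f,g:(0,\infty)\to\mathbb{R}$ be strictly increasing and differentiable with $f'>0$ and $g'>0$ on $(0,\infty)$, and suppose that $f\circ g^{-1}$ is strictly convex on $g((0,\infty))$. Let $p,q$ be positive densities with respect to a positive measure $\mu$ on a measurable space $\mathcal{X}$. Then the quasi-arithmetic $1$-divergence satisfies $$I_1^{f,g}[p:q]=\lim_{\alpha\to 1} I_\alpha^{f,g}[p:q]=\int\left(\frac{f(q)-f(p)}{f'(p)}-\frac{g(q)-g(p)}{g'(p)}\right)\mathrm{d}\mu\;\geq\;0,$$ and $I_0^{f,g}[p:q]:=\lim_{\alpha\to0}I_\alpha^{f,g}[p:q]=I_1^{f,g}[q:p]$.
   Context: For a strictly increasing continuous generator $h$ on $(0,\infty)$, the weighted quasi-arithmetic mean is $M^h_\lambda(x,y)=h^{-1}\big((1-\lambda)h(x)+\lambda h(y)\big)$. For $\alpha\in(0,1)$ the quasi-arithmetic $\alpha$-divergence between positive densities $p,q$ is $$I_\alpha^{f,g}[p:q]=\frac{1}{\alpha(1-\alpha)}\int\big(M^f_{1-\alpha}(p(x),q(x))-M^g_{1-\alpha}(p(x),q(x))\big)\,\mathrm{d}\mu(x),$$ and $I_1^{f,g}$, $I_0^{f,g}$ denote its limits as $\alpha\to1$ and $\alpha\to0$ respectively (the limit being taken under the integral sign). *)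

(* Defs.v *)
From HB Require Import structures.
From mathcomp Require Import all_boot all_order all_algebra.
From mathcomp Require Import all_classical all_reals all_analysis.
Set Implicit Arguments. Unset Strict Implicit. Unset Printing Implicit Defensive.
Import Order.TTheory GRing.Theory Num.Theory.
Import numFieldNormedType.Exports.
Local Open Scope classical_set_scope.
Local Open Scope ring_scope.

(* Inverse of a generator h restricted to (0,+oo): h^{-1}(y) is the (unique,
   for strictly increasing h) x > 0 with h x = y (default 0 if none). *)
Definition inv_pos {R : realType} (h : R -> R) (y : R) : R :=
  xget 0 [set x | 0 < x /\ h x = y].

Definition qa_mean {R : realType} (h : R -> R) (lam x y : R) : R :=
  inv_pos h ((1 - lam) * h x + lam * h y).

Definition qa_integrand {R : realType} (f g : R -> R) (a x y : R) : R :=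
  (qa_mean f (1 - a) x y - qa_mean g (1 - a) x y) / (a * (1 - a)).

Definition qa_div {R : realType} (f g : R -> R) (d : measure_display)
  (T : measurableType d) (mu : {measure set T -> \bar R}) (a : R)
  (p q : T -> R) : \bar R :=
  (\int[mu]_x (qa_integrand f g a (p x) (q x))%:E)%E.

Definition qa_div1 {R : realType} (f g : R -> R) (d : measure_display)
  (T : measurableType d) (mu : {measure set T -> \bar R})
  (p q : T -> R) : \bar R :=
  (\int[mu]_x (lim (qa_integrand f g a (p x) (q x) @[a --> 1^'-]))%:E)%E.

Definition qa_div0 {R : realType} (f g : R -> R) (d : measure_display)
  (T : measurableType d) (mu : {measure set T -> \bar R})
  (p q : T -> R) : \bar R :=
  (\int[mu]_x (lim (qa_integrand f g a (p x) (q x) @[a --> 0^'+]))%:E)%E.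

(* h strictly convex on the set D (D assumed an interval here). *)
Definition strictly_convex_on {R : realType} (D : set R) (h : R -> R) : Prop :=
  forall u v t, D u -> D v -> u != v -> 0 < t < 1 ->
    h ((1 - t) * u + t * v) < (1 - t) * h u + t * h v.

Definition qa_limit_integrand {R : realType} (f g : R -> R) (x y : R) : R :=
  (f y - f x) / derive1 f x - (g y - g x) / derive1 g x.

(* Main.v *)
Require Import Defs.
From HB Require Import structures.
From mathcomp Require Import all_boot all_order all_algebra.
From mathcomp Require Import all_classical all_reals all_analysis.
From mathcomp Require Import ring lra.
Set Implicit Arguments. Unset Strict Implicit. Unset Printing Implicit Defensive.
Import Order.TTheory GRing.Theory Num.Theory.
Import numFieldNormedType.Exports.
Local Open Scope classical_set_scope.
Local Open Scope ring_scope.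

Lemma cvg_to_within {T} {U : topologicalType} (F : set_system T) {FF : Filter F}
  (f : T -> U) (a : U) (D : set U) :
  f @ F --> a -> (\forall t \near F, D (f t)) -> f @ F --> within D (nbhs a).
Proof.
move=> fa fD A /= HA.
have := fa _ HA => /= H.
by apply: filterS2 H fD => t /= H1 H2; apply: H1.
Qed.

Section Core.
Variables (R : realType) (h : R -> R).
Hypothesis hi : forall x y, 0 < x -> x < y -> h x < h y.
Hypothesis hd : forall x, 0 < x -> derivable h x 1 /\ 0 < derive1 h x.

Lemma hle x y : 0 < x -> x <= y -> h x <= h y.
Proof.
move=> x0; rewrite le_eqVlt => /orP[/eqP->//|xy]; exact/ltW/hi.
Qed.

Lemma hinj x y : 0 < x -> 0 < y -> h x = h y -> x = y.
Proof.
move=> x0 y0 e; case: (ltgtP x y) => // xy.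
  by have := hi x0 xy; rewrite e ltxx.
by have := hi y0 xy; rewrite e ltxx.
Qed.

Lemma inv_posK x : 0 < x -> inv_pos h (h x) = x.
Proof.
move=> x0; rewrite /inv_pos.
have [z0 hz] : [set z | 0 < z /\ h z = h x] (xget 0 [set z | 0 < z /\ h z = h x]).
  by apply: xgetPex; exists x.
exact: hinj.
Qed.

Lemma ivt_pos a b v : 0 < a -> a <= b -> h a <= v <= h b ->
  exists2 c, 0 < c & h c = v.
Proof.
move=> a0 ab /andP[v1 v2].
have cont : {within `[a, b], continuous h}.
  apply: derivable_within_continuous => z; rewrite in_itv /= => /andP[az _].
  by apply: (hd _).1; exact: lt_le_trans az.
have [] := @IVT R h a b v ab cont.
  by apply/andP; split; rewrite ?ge_min ?le_max ?v1 ?v2 ?orbT.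
move=> c; rewrite in_itv /= => /andP[ac _] hc; exists c => //.
exact: lt_le_trans ac.
Qed.

Lemma mean_spec l x y : 0 < x -> 0 < y -> 0 <= l <= 1 ->
  0 < qa_mean h l x y /\ h (qa_mean h l x y) = (1 - l) * h x + l * h y.
Proof.
move=> x0 y0 /andP[l0 l1].
set v := (1 - l) * h x + l * h y.
suff : exists z, 0 < z /\ h z = v.
  by move=> ex; have := xgetPex 0 ex.
have [xy|yx] := leP x y.
  have hxy := hle x0 xy.
  have [c c0 hc] : exists2 c, 0 < c & h c = v.
    apply: (ivt_pos x0 xy); apply/andP; split; rewrite /v; nra.
  by exists c.
have hxy := hle y0 (ltW yx).
have [c c0 hc] : exists2 c, 0 < c & h c = v.
  apply: (ivt_pos y0 (ltW yx)); apply/andP; split; rewrite /v; nra.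
by exists c.
Qed.

End Core.
Section Core2.
Variables (R : realType) (h : R -> R).
Hypothesis hi : forall x y, 0 < x -> x < y -> h x < h y.
Hypothesis hd : forall x, 0 < x -> derivable h x 1 /\ 0 < derive1 h x.

Lemma lin_cvg (a c : R) : (a + l * c) @[l --> 0^'+] --> a.
Proof.
have H : (a + l * c) @[l --> 0] --> a + 0 * c.
  apply: (@cvgD _ _ _ _ _ (fun=> a) (fun l => l * c)); first exact: cvg_cst.
  apply: cvgMl; exact: cvg_id.
rewrite mul0r addr0 in H; exact: cvg_at_right_filter.
Qed.

Lemma mean_cvg x y : 0 < x -> 0 < y -> qa_mean h l x y @[l --> 0^'+] --> x.
Proof.
move=> x0 y0; apply/cvgrPdist_lt => e e0.
set e' := Num.min (e / 2) (x / 2).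
have e'0 : 0 < e' by rewrite lt_min; apply/andP; split; lra.
have e'x : e' < x by rewrite gt_min; apply/orP; right; lra.
have e'e : e' < e by rewrite gt_min; apply/orP; left; lra.
have h1 : h (x - e') < h x by apply: hi; lra.
have h2 : h x < h (x + e') by apply: hi; lra.
set d := Num.min (h x - h (x - e')) (h (x + e') - h x).
have d0 : 0 < d by rewrite lt_min; apply/andP; split; lra.
have := @lin_cvg (h x) (h y - h x).
move/cvgrPdist_lt => /(_ d d0) H.
have l01 : \forall l \near (0:R)^'+, 0 < l < 1.
  apply: (filterS2 _ _ (nbhs_right_gt (0:R)) (nbhs_right_lt (@ltr01 R))) => l a b.
  by rewrite a b.
apply: (filterS2 _ _ H l01) => l Hl /andP[l0 l1].
have [z0 hz] := mean_spec hi hd x0 y0 (l := l) ltac:(apply/andP; split; lra).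
move: Hl; set z := qa_mean h l x y in z0 hz *.
have -> : h x + l * (h y - h x) = (1 - l) * h x + l * h y by ring.
rewrite -hz => Hl.
have : `|h x - h z| < h x - h (x - e') /\ `|h x - h z| < h (x + e') - h x.
  by move: Hl; rewrite lt_min => /andP[].
case=> A B.
have zl : x - e' < z.
  rewrite ltNge; apply/negP => zle.
  have : h z <= h (x - e') by apply: hle => //.
  move: A; rewrite ltr_norml => /andP[_ A]; lra.
have zr : z < x + e'.
  rewrite ltNge; apply/negP => zle.
  have : h (x + e') <= h z by apply: hle => //; lra.
  move: B; rewrite ltr_norml => /andP[B _]; lra.
rewrite ltr_norml; apply/andP; split; lra.
Qed.

End Core2.
Lemma deriv_cvg (R : realType) (h : R -> R) x : derivable h x 1 ->
  (fun t => t^-1 * (h (t + x) - h x)) @ 0^' --> derive1 h x.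
Proof.
move=> dh.
have E : (fun t => t^-1 * (h (t + x) - h x)) = (fun h0 => h0^-1 *: ((h \o shift x) (h0 *: 1) - h x)).
  by apply/funext => t /=; rewrite /shift /= [t%:A]mulr1.
rewrite /derive1 E; exact: dh.
Qed.

Section Core3.
Variables (R : realType) (h : R -> R).
Hypothesis hi : forall x y, 0 < x -> x < y -> h x < h y.
Hypothesis hd : forall x, 0 < x -> derivable h x 1 /\ 0 < derive1 h x.

Lemma quot_cvg x y : 0 < x -> 0 < y ->
  ((qa_mean h l x y - x) / l) @[l --> 0^'+] --> (h y - h x) / derive1 h x.
Proof.
move=> x0 y0.
have l01 : \forall l \near (0:R)^'+, 0 < l < 1.
  apply: (filterS2 _ _ (nbhs_right_gt (0:R)) (nbhs_right_lt (@ltr01 R))) => l a b.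
  by rewrite a b.
have [c0|c0] := eqVneq (h y - h x) 0.
  have yx : y = x by apply: (hinj hi) => //; lra.
  subst y; rewrite c0 mul0r.
  have -> : (fun l => (qa_mean h l x x - x) / l) = (fun=> 0).
    apply/funext => l; rewrite /qa_mean.
    have -> : (1 - l) * h x + l * h x = h x by ring.
    by rewrite (inv_posK hi x0) subrr mul0r.
  exact: cvg_cst.
have [dh hd0] := hd x0.
set t := fun l => qa_mean h l x y - x.
have tcvg : t @ (0:R)^'+ --> (0:R)^'.
  apply: cvg_to_within.
    have := @cvgB _ _ _ _ _ _ (fun=> x) _ _ (mean_cvg hi hd x0 y0) (cvg_cst x).
    rewrite subrr => H; exact: H.
  apply: filterS l01 => l /andP[l0 l1].
  have [z0 hz] := mean_spec hi hd x0 y0 (l := l) ltac:(apply/andP; split; lra).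
  rewrite /t subr_eq0; apply/eqP => ex.
  move: hz; rewrite ex => hz.
  have : l * (h y - h x) = 0 by rewrite mulrBr; lra.
  by move/eqP; rewrite mulf_eq0 (negbTE c0) orbF; move/eqP => l00; lra.
have Dc := cvg_comp _ _ tcvg (deriv_cvg dh).
have hd0' : derive1 h x != 0 by rewrite gt_eqF.
have H : ((h y - h x) * ((t l)^-1 * (h (t l + x) - h x))^-1) @[l --> (0:R)^'+]
   --> (h y - h x) / derive1 h x.
  apply: cvgMr; exact: (cvgV hd0' Dc).
apply: (cvg_trans _ H); apply: near_eq_cvg.
apply: filterS l01 => l /andP[l0 l1] /=.
have [z0 hz] := mean_spec hi hd x0 y0 (l := l) ltac:(apply/andP; split; lra).
rewrite /t.
set z := qa_mean h l x y in z0 hz *.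
have tz : z - x != 0.
  rewrite subr_eq0; apply/eqP => ex.
  move: hz; rewrite ex => hz.
  have : l * (h y - h x) = 0 by rewrite mulrBr; lra.
  by move/eqP; rewrite mulf_eq0 (negbTE c0) orbF; move/eqP => l00; lra.
rewrite subrK hz.
have l0' : l != 0 by rewrite gt_eqF.
field; rewrite l0' tz /=.
have -> : (1 - l) * h x + l * h y - h x = l * (h y - h x) by ring.
by rewrite mulf_neq0.
Qed.
End Core3.
Lemma lin_cvgp (R : realType) (p a c : R) : (a + l * c) @[l --> p] --> a + p * c.
Proof.
  apply: (@cvgD _ _ _ _ _ (fun=> a) (fun l => l * c)); first exact: cvg_cst.
  apply: cvgMl; exact: cvg_id.
Qed.


Definition qa_integrand {R : realType} (f g : R -> R) (a x y : R) : R :=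
  (qa_mean f (1 - a) x y - qa_mean g (1 - a) x y) / (a * (1 - a)).
Definition qa_limit_integrand {R : realType} (f g : R -> R) (x y : R) : R :=
  (f y - f x) / derive1 f x - (g y - g x) / derive1 g x.

Lemma one_minus_cvg (R : realType) : (1 - a) @[a --> (1:R)^'-] --> (0:R)^'+.
Proof.
apply: cvg_to_within.
  have H : (1 + a * (-1)) @[a --> (1:R)] --> (1 + 1 * (-1) : R).
    exact: lin_cvgp.
  apply: cvg_at_left_filter.
  rewrite mulrN1 subrr in H.
  rewrite (_ : (fun a => 1 - a) = (fun a => 1 + a * (-1))) //.
  by apply/funext => a; rewrite mulrN1.
by apply: filterS (nbhs_left_lt (1:R)) => a /=; rewrite subr_gt0.
Qed.

Lemma one_minus_cvg0 (R : realType) : (1 - a) @[a --> (0:R)^'+] --> (1:R)^'-.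
Proof.
apply: cvg_to_within.
  have H : (1 + a * (-1)) @[a --> (0:R)] --> (1 + 0 * (-1) : R).
    exact: lin_cvgp.
  apply: cvg_at_right_filter.
  rewrite mul0r addr0 in H.
  rewrite (_ : (fun a => 1 - a) = (fun a => 1 + a * (-1))) //.
  by apply/funext => a; rewrite mulrN1.
by apply: filterS (nbhs_right_gt (0:R)) => a /=; rewrite ltrBlDr ltrDl.
Qed.

Section Main.
Variables (R : realType) (f g : R -> R).
Hypothesis hf_incr : forall x y, 0 < x -> x < y -> f x < f y.
Hypothesis hg_incr : forall x y, 0 < x -> x < y -> g x < g y.
Hypothesis hf_der : forall x, 0 < x -> derivable f x 1 /\ 0 < derive1 f x.
Hypothesis hg_der : forall x, 0 < x -> derivable g x 1 /\ 0 < derive1 g x.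

Lemma lim1 x y : 0 < x -> 0 < y ->
  qa_integrand f g a x y @[a --> (1:R)^'-] --> qa_limit_integrand f g x y.
Proof.
move=> x0 y0.
have s := @one_minus_cvg R.
have Qf := cvg_comp _ _ s (quot_cvg hf_incr hf_der x0 y0).
have Qg := cvg_comp _ _ s (quot_cvg hg_incr hg_der x0 y0).
have inva : (a^-1) @[a --> (1:R)^'-] --> (1:R)^-1.
  apply: cvgV; first exact: oner_neq0.
  apply: cvg_at_left_filter; exact: cvg_id.
have H : (((qa_mean f (1 - a) x y - x) / (1 - a) - (qa_mean g (1 - a) x y - x) / (1 - a))
     * a^-1) @[a --> (1:R)^'-] -->
   ((f y - f x) / derive1 f x - (g y - g x) / derive1 g x) * 1^-1.
  apply: cvgM => //; exact: cvgB.
rewrite invr1 mulr1 in H.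
apply: (cvg_trans _ H); apply: near_eq_cvg.
have l01 : \forall l \near (1:R)^'-, 0 < l < 1.
  apply: (filterS2 _ _ (nbhs_left_gt (@ltr01 R)) (nbhs_left_lt (1:R))) => l a b.
  by rewrite a b.
apply: filterS l01 => a /andP[a0 a1] /=.
rewrite /qa_integrand.
have a0' : a != 0 by rewrite gt_eqF.
have a1' : 1 - a != 0 by rewrite subr_eq0 eq_sym lt_eqF.
by field; rewrite a0' a1'.
Qed.


Lemma mean_le (hconv : strictly_convex_on (g @` `]0, +oo[) (f \o inv_pos g))
  l x y : 0 < x -> 0 < y -> 0 < l < 1 -> qa_mean g l x y <= qa_mean f l x y.
Proof.
move=> x0 y0 /andP[l0 l1].
have l01 : 0 <= l <= 1 by apply/andP; split; lra.
have [zg0 hzg] := mean_spec hg_incr hg_der x0 y0 l01.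
have [zf0 hzf] := mean_spec hf_incr hf_der x0 y0 l01.
have [xy|xy] := eqVneq x y.
  subst y.
  rewrite /qa_mean.
  have -> : (1 - l) * g x + l * g x = g x by ring.
  have -> : (1 - l) * f x + l * f x = f x by ring.
  by rewrite (inv_posK hg_incr x0) (inv_posK hf_incr x0).
have gxy : g x != g y.
  by apply/eqP => e; move/eqP: xy; apply; exact: (hinj hg_incr x0 y0 e).
have Dx : (g @` `]0, +oo[) (g x) by exists x => //=; rewrite in_itv /= andbT.
have Dy : (g @` `]0, +oo[) (g y) by exists y => //=; rewrite in_itv /= andbT.
have := hconv (g x) (g y) l Dx Dy gxy ltac:(apply/andP; split; lra).
rewrite /= (inv_posK hg_incr x0) (inv_posK hg_incr y0) -hzf.
rewrite -hzg (inv_posK hg_incr zg0) => H.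
rewrite leNgt; apply/negP => lt.
have := hle hf_incr zf0 (ltW lt).
by rewrite leNgt H.
Qed.

Lemma integrand_ge0 (hconv : strictly_convex_on (g @` `]0, +oo[) (f \o inv_pos g))
  a x y : 0 < x -> 0 < y -> 0 < a < 1 -> 0 <= qa_integrand f g a x y.
Proof.
move=> x0 y0 /andP[a0 a1].
rewrite /qa_integrand; apply: divr_ge0.
  rewrite subr_ge0; apply: mean_le => //; apply/andP; split; lra.
apply: mulr_ge0; lra.
Qed.

Lemma integrand_swap a x y :
  qa_integrand f g a x y = qa_integrand f g (1 - a) y x.
Proof.
rewrite /qa_integrand /qa_mean.
have e1 : forall h : R -> R, (1 - (1 - a)) * h x + (1 - a) * h y =
   (1 - (1 - (1 - a))) * h y + (1 - (1 - a)) * h x by move=> h; ring.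
by rewrite !e1 (_ : a * (1 - a) = (1 - a) * (1 - (1 - a))) //; ring.
Qed.

Lemma lim0 x y : 0 < x -> 0 < y ->
  qa_integrand f g a x y @[a --> (0:R)^'+] --> qa_limit_integrand f g y x.
Proof.
move=> x0 y0.
have -> : (fun a => qa_integrand f g a x y) =
  (fun b => qa_integrand f g b y x) \o (fun a => 1 - a).
  by apply/funext => a /=; rewrite integrand_swap.
exact: (cvg_comp _ _ (@one_minus_cvg0 R) (lim1 y0 x0)).
Qed.

End Main.

Unset Implicit Arguments.

Theorem theorem2 (R : realType) (f g : R -> R)
  (hf_incr : forall x y, 0 < x -> x < y -> f x < f y)
  (hg_incr : forall x y, 0 < x -> x < y -> g x < g y)
  (hf_der : forall x, 0 < x -> derivable f x 1 /\ 0 < derive1 f x)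
  (hg_der : forall x, 0 < x -> derivable g x 1 /\ 0 < derive1 g x)
  (hconv : strictly_convex_on (g @` `]0, +oo[) (f \o inv_pos g))
  (d : measure_display) (T : measurableType d) (mu : {measure set T -> \bar R})
  (p q : T -> R)
  (mp : measurable_fun setT p) (mq : measurable_fun setT q)
  (pp : forall x, 0 < p x) (qp : forall x, 0 < q x) :
  (forall x, qa_integrand f g a (p x) (q x) @[a --> 1^'-]
               --> qa_limit_integrand f g (p x) (q x)) /\
  qa_div1 f g mu p q = (\int[mu]_x (qa_limit_integrand f g (p x) (q x))%:E)%E /\
  (0 <= \int[mu]_x (qa_limit_integrand f g (p x) (q x))%:E)%E /\
  (forall x, qa_integrand f g a (p x) (q x) @[a --> 0^'+]
               --> qa_limit_integrand f g (q x) (p x)) /\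
  qa_div0 f g mu p q = qa_div1 f g mu q p.
Proof.
have L1 := fun x => lim1 hf_incr hg_incr hf_der hg_der (pp x) (qp x).
have L1' := fun x => lim1 hf_incr hg_incr hf_der hg_der (qp x) (pp x).
have L0 := fun x => lim0 hf_incr hg_incr hf_der hg_der (pp x) (qp x).
split; first exact: L1.
split.
  rewrite /qa_div1; apply: eq_integral => x _.
  by rewrite (cvg_lim _ (L1 x)).
split.
  apply: integral_ge0 => x _; rewrite lee_fin.
  rewrite -(cvg_lim _ (L1 x)) //.
  apply: limr_ge; first by apply/cvg_ex; eexists; exact: (L1 x).
  have l01 : \forall l \near (1:R)^'-, 0 < l < 1.
    apply: (filterS2 _ _ (nbhs_left_gt (@ltr01 R)) (nbhs_left_lt (1:R))) => l a b.
    by rewrite a b.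
  apply: filterS l01 => a a01.
  exact: (integrand_ge0 hf_incr hg_incr hf_der hg_der hconv (pp x) (qp x) a01).
split; first exact: L0.
rewrite /qa_div0 /qa_div1; apply: eq_integral => x _.
by rewrite (cvg_lim _ (L0 x)) // (cvg_lim _ (L1' x)).
Qed.
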